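(* Let $G=R_2$, let $\mathcal{X}$ be a linear vector field on $G$ with associated matrix $\mathcal{D}^*$ conjugated to $\begin{bmatrix}a&-b\\ b&a\end{bmatrix}$ with $b\neq0$, and let $h:G\to G$, $h(t,x,y)=(t,0,\beta_3y)$ with $\beta_3\neq0$, so that $K=\ker h=\{(t,x,y)\in G:t=y=0\}$. Then the pair $(\mathcal{X},\pi_K)$ is observable.
   Context: $R_2$ is $\mathbb{R}^3$ with elements $(t,x,y)$ and product $(t,x,y)\cdot(s,z,w)=(t+s,\,x+z,\,y+e^tw)$; its identity is $(0,0,0)$. A linear vector field on $G$ is a vector field whose flow $(\varphi_s)_{s\in\mathbb{R}}$ is a one-parameter group of automorphisms of $G$. Every linear vector field $\mathcal{X}$ on $R_2$ has the form $\mathcal{X}(t,v)=(0,\mathcal{D}^*v+\Lambda_t\xi)$, $v=(x,y)^T$, where $\mathcal{D}^*\in\mathbb{R}^{2\times2}$ is its associated matrix, $\xi\in\mathbb{R}^2$, $\Lambda_t=\mathrm{diag}(t,e^t-1)$; its flow is $\varphi_s(t,v)=(t,\,e^{s\mathcal{D}^*}v+F_s\Lambda_t\xi)$ with $F_s=\sum_{j\ge1}\frac{s^j(\mathcal{D}^* )^{j-1}}{j!}$. A matrix $M$ is conjugated to $N$ if $N=PMP^{-1}$ for some $P\in GL_2(\mathbb{R})$. For a closed subgroup $K$, $\pi_K:G\to G/K$ is the canonical projection. The pair $(\mathcal{X},\pi_K)$ is observable if for all $x_1\neq x_2$ in $G$ there is $t\ge0$ with $\pi_K(\varphi_t(x_1))\ne\pi_K(\varphi_t(x_2))$.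 *)

(* Defs.v *)
From HB Require Import structures.
From mathcomp Require Import all_boot all_order all_algebra.
From mathcomp Require Import all_classical all_reals all_analysis.
Set Implicit Arguments. Unset Strict Implicit. Unset Printing Implicit Defensive.
Import Order.TTheory GRing.Theory Num.Theory.
Import numFieldTopology.Exports numFieldNormedType.Exports.
Local Open Scope ring_scope.
Local Open Scope classical_set_scope.

Section R2.
Variable R : realType.

(* Elements (t, x, y) of R_2 = R^3, written (t, v) with v = (x, y)^T. *)
Definition R2 := (R * 'cV[R]_2)%type.

(* diag(1, e^t) : the action of t on v in the product. *)
Definition rho (t : R) : 'M[R]_2 :=
  \matrix_(i, j) (if i == j then (if i == 0 then 1 else expR t) else 0).

(* (t,x,y).(s,z,w) = (t+s, x+z, y+e^t w) *)
Definition mulR2 (g h : R2) : R2 := (g.1 + h.1, g.2 + rho g.1 *m h.2).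
Definition oneR2 : R2 := (0, 0).

Definition Lambda (t : R) : 'M[R]_2 :=
  \matrix_(i, j) (if i == j then (if i == 0 then t else expR t - 1) else 0).

Definition expm (s : R) (D : 'M[R]_2) : 'M[R]_2 :=
  \matrix_(i, j) limn (fun n : nat =>
     ((\sum_(k < n) ((s ^+ k / (k`!)%:R) *: D ^+ k)) i j : R)).

Definition Fs (s : R) (D : 'M[R]_2) : 'M[R]_2 :=
  \matrix_(i, j) limn (fun n : nat =>
     ((\sum_(k < n) ((s ^+ k.+1 / (k.+1`!)%:R) *: D ^+ k)) i j : R)).

(* The linear vector field X(t,v) = (0, D v + Lambda_t xi) is determined by
   (D, xi); its flow is phi_s(t,v) = (t, e^{sD} v + F_s Lambda_t xi). *)
Definition lvf_flow (D : 'M[R]_2) (xi : 'cV[R]_2) (s : R) (g : R2) : R2 :=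
  (g.1, expm s D *m g.2 + Fs s D *m Lambda g.1 *m xi).

Definition conjugated (M N : 'M[R]_2) : Prop :=
  exists P : 'M[R]_2, P \in unitmx /\ N = P *m M *m invmx P.

Definition rotmx (a b : R) : 'M[R]_2 :=
  \matrix_(i, j) (if i == j then a else if i == 0 then - b else b).

Definition hmap (beta3 : R) (g : R2) : R2 :=
  (g.1, \col_i (if i == 0 then 0 else beta3 * g.2 1 0)).

Definition kerR2 (f : R2 -> R2) : set R2 := [set g | f g = oneR2].

(* canonical projection G -> G/K, a point mapped to its left coset gK *)
Definition piK (K : set R2) (g : R2) : set R2 := [set mulR2 g k | k in K].

Definition observable (phi : R -> R2 -> R2) (pi : R2 -> set R2) : Prop :=
  forall g1 g2 : R2, g1 <> g2 ->
    exists s : R, 0 <= s /\ pi (phi s g1) <> pi (phi s g2).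

End R2.

(* Main.v *)
Require Import Defs.
From HB Require Import structures.
From mathcomp Require Import all_boot all_order all_algebra.
From mathcomp Require Import all_classical all_reals all_analysis.
From mathcomp Require Import ring lra.
Import Order.TTheory GRing.Theory Num.Theory.
Import numFieldTopology.Exports numFieldNormedType.Exports.
Set Implicit Arguments. Unset Strict Implicit.
Unset Printing Implicit Defensive.
Local Open Scope ring_scope.

Section Aux.
Variable R : realType.

Lemma sum2 (F : 'I_2 -> R) : \sum_(i < 2) F i = F 0 + F 1.
Proof. rewrite !big_ord_recl big_ord0 addr0; congr (F _ + F _); exact: val_inj. Qed.

Lemma D10_neq0 (D : 'M[R]_2) a b : b != 0 -> conjugated D (rotmx a b) -> D 1 0 != 0.
Proof.
move=> b0 [P [uP eN]].
have eq : rotmx a b *m P = P *m D.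
  by rewrite eN -!mulmxA mulVmx // mulmx1.
have h00 := congr1 (fun M : 'M[R]_2 => M 0 0) eq.
have h10 := congr1 (fun M : 'M[R]_2 => M 1 0) eq.
move: h00 h10; rewrite /= !mxE !sum2 !mxE /=.
move=> h00 h10; apply/eqP => D0; move: h00 h10; rewrite D0 => h00 h10.
rewrite !mulr0 !addr0 in h00 h10.
have hp : ((a - D 0 0)^+2 + b^+2) * P 0 0 = 0.
  transitivity ((a - D 0 0) * ((a * P 0 0 + - b * P 1 0) - P 0 0 * D 0 0)
     + b * ((b * P 0 0 + a * P 1 0) - P 1 0 * D 0 0)); first by ring.
  by rewrite h00 h10 !subrr !mulr0 addr0.
have hr : ((a - D 0 0)^+2 + b^+2) * P 1 0 = 0.
  transitivity (- b * ((a * P 0 0 + - b * P 1 0) - P 0 0 * D 0 0)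
     + (a - D 0 0) * ((b * P 0 0 + a * P 1 0) - P 1 0 * D 0 0)); first by ring.
  by rewrite h00 h10 !subrr !mulr0 addr0.
have pos : (a - D 0 0)^+2 + b^+2 != 0.
  by apply: lt0r_neq0; rewrite ltr_pwDr ?sqr_ge0 // exprn_even_gt0.
move: hp hr => /eqP; rewrite mulf_eq0 (negbTE pos) /= => /eqP p0 /eqP; rewrite mulf_eq0 (negbTE pos) /= => /eqP r0.
have := congr1 (fun M : 'M[R]_2 => M 0 0) (mulVmx uP).
by rewrite /= !mxE !sum2 p0 r0 !mulr0 addr0 => /esym/eqP; rewrite oner_eq0.
Qed.

Definition mD (D : 'M[R]_2) : R := \sum_i \sum_j `|D i j|.

Lemma mD_ge (D : 'M[R]_2) i j : `|D i j| <= mD D.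
Proof.
rewrite /mD (bigD1 i) //= (bigD1 j) //= -addrA lerDl.
by apply: addr_ge0; apply: sumr_ge0 => *; [|apply: sumr_ge0 => *]; exact: normr_ge0.
Qed.

Lemma powbound (D : 'M[R]_2) k i j : `|(D ^+ k) i j| <= mD D ^+ k.
Proof.
elim: k i j => [|k IH] i j.
  rewrite expr0 mxE; case: (i == j); by rewrite ?normr1 ?normr0.
rewrite exprSr -mulmxE mxE.
apply: le_trans (ler_norm_sum _ _ _) _.
apply: (@le_trans _ _ (\sum_l mD D ^+ k * `|D l j|)).
  by apply: ler_sum => l _; rewrite normrM ler_wpM2r.
have m0 : 0 <= mD D by apply: le_trans (mD_ge D 0 0).
rewrite -mulr_sumr exprSr ler_wpM2l ?exprn_ge0 //.
rewrite /mD exchange_big [leRHS](bigD1 j) //= lerDl.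
by apply: sumr_ge0 => *; apply: sumr_ge0 => *.
Qed.

Lemma geom_bound (q : R) n : 0 <= q -> q <= 1/2 ->
  \sum_(k < n) q ^+ k <= 2 - 2 * q ^+ n.
Proof.
move=> q0 q1; elim: n => [|n IH]; first by rewrite big_ord0 expr0; lra.
rewrite big_ord_recr /= exprS.
have : 0 <= q ^+ n by exact: exprn_ge0.
nra.
Qed.


Lemma expm_entry (D : 'M[R]_2) s i j : `|s| * mD D <= 1/2 ->
  `|expm s D i j - ((i == j)%:R + s * D i j)| <= 2 * (`|s| * mD D) ^+ 2.
Proof.
move=> hq.
have m0 : 0 <= mD D by apply: le_trans (mD_ge D 0 0).
set q := `|s| * mD D in hq *.
have q0 : 0 <= q by rewrite mulr_ge0.
pose a k := s ^+ k / (k`!)%:R * (D ^+ k) i j.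
have ha : forall k, `|a k| <= q ^+ k.
  move=> k; rewrite /a normrM normrM normfV normrX /q exprMn.
  apply: ler_pM; rewrite ?mulr_ge0 ?invr_ge0 ?exprn_ge0 //.
    apply: ler_piMr; rewrite ?exprn_ge0 // ger0_norm // invf_le1 ?ltr0n ?fact_gt0 //.
    by rewrite ler1n fact_gt0.
  exact: powbound.
have cv : cvgn (series a).
  apply: normed_cvg.
  apply: (@series_le_cvg _ _ (geometric 1 q)).
  all: try (move=> n /=; rewrite ?mul1r ?exprn_ge0 ?normr_ge0 //; exact: ha).
  by apply: is_cvg_geometric_series; rewrite ger0_norm //; lra.
set c := (i == j)%:R + s * D i j.
have hp : forall n, `|series a n.+2 - c| <= \sum_(k < n) q ^+ k.+2.
  elim => [|n IH].
    rewrite big_ord0 !seriesSr /= seriesEord /= big_ord0 /a /c expr0 expr1 /= !mxE.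
    by rewrite !divr1 !mul1r add0r subrr normr0.
  rewrite seriesSr big_ord_recr /= -addrAC.
  apply: le_trans (ler_normD _ _) _.
  by apply: lerD => //.
have hp2 : forall n, `|series a n.+2 - c| <= 2 * q ^+ 2.
  move=> n; apply: le_trans (hp n) _.
  have -> : \sum_(k < n) q ^+ k.+2 = q ^+ 2 * \sum_(k < n) q ^+ k.
    by rewrite mulr_sumr; apply: eq_bigr => k _; rewrite -exprD add2n.
  have := @geom_bound q n q0 hq.
  have : 0 <= q ^+ n by exact: exprn_ge0.
  have : 0 <= q ^+ 2 by exact: exprn_ge0.
  nra.
have -> : expm s D i j = limn (series a).
  rewrite /expm mxE.
  have -> : (fun n : nat => (\sum_(k < n) ((s ^+ k / (k`!)%:R) *: D ^+ k)) i j) = series a.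
    apply: funext => n.
    by rewrite seriesEord /= summxE; apply: eq_bigr => k _; rewrite !mxE.
  by [].
rewrite ler_distl; apply/andP; split.
  apply: limr_ge => //; near=> n.
  have /subnK <- : (2 <= n)%N by near: n; exact: nbhs_infty_ge.
  by rewrite addn2; move: (hp2 (n - 2)%N); rewrite ler_distl => /andP[].
apply: limr_le => //; near=> n.
have /subnK <- : (2 <= n)%N by near: n; exact: nbhs_infty_ge.
by rewrite addn2; move: (hp2 (n - 2)%N); rewrite ler_distl => /andP[].
Unshelve. all: by end_near.
Qed.


Lemma piK_eq (beta3 : R) (g1 g2 : R2 R) : beta3 != 0 ->
  piK (kerR2 (hmap beta3)) g1 = piK (kerR2 (hmap beta3)) g2 ->
  g1.1 = g2.1 /\ g1.2 1 0 = g2.2 1 0.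
Proof.
move=> hb e.
have h1 : piK (kerR2 (hmap beta3)) g1 g1.
  exists (oneR2 R).
    rewrite /kerR2 /hmap /oneR2 /=; congr pair; apply/matrixP => i j.
    by rewrite !mxE mulr0 if_same.
  by case: g1 e => t v e; rewrite /mulR2 /oneR2 /= addr0 mulmx0 addr0.
rewrite e in h1; case: h1 => k hk ek.
have k1 : k.1 = 0 by have := congr1 fst hk.
have k2 : k.2 1 0 = 0.
  have := congr1 (fun g : R2 R => g.2 1 0) hk; rewrite /= !mxE /=.
  by move/eqP; rewrite mulf_eq0 (negbTE hb) /= => /eqP.
rewrite -ek /mulR2 /= k1 addr0; split => //.
by rewrite mxE mxE sum2 k2 mulr0 addr0 /rho mxE /= mul0r addr0.
Qed.

End Aux.

Theorem proposition3p6 (R : realType) (D : 'M[R]_2) (xi : 'cV[R]_2)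
    (a b beta3 : R) :
  b != 0 -> conjugated D (rotmx a b) -> beta3 != 0 ->
  observable (lvf_flow D xi) (piK (kerR2 (hmap beta3))).
Proof.
move=> hb hc hb3 [t1 v1] [t2 v2] hne.
have [ht|ht] := eqVneq t1 t2; last first.
  exists 0; split => //; move/(piK_eq hb3) => [/= e _].
  by move/eqP: ht.
subst t2.
suff [s [s0 hs]] : exists s, 0 <= s /\ (expm s D *m (v1 - v2)) 1 0 != 0.
  exists s; split => //; move/(piK_eq hb3) => [_ e2].
  move: e2 hs; rewrite /lvf_flow /= mulmxBr.
  move: (expm s D *m v1) (expm s D *m v2) (Fs s D *m Lambda t1 *m xi) => A B C.
  by rewrite !mxE => /addIr ->; rewrite subrr eqxx.
set w := v1 - v2.
have wne : w != 0.
  by rewrite subr_eq0; apply/eqP => e; apply: hne; rewrite e.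
have E : forall s, (expm s D *m w) 1 0 = expm s D 1 0 * w 0 0 + expm s D 1 1 * w 1 0.
  by move=> s; rewrite mxE sum2.
have ex0 : forall i j, expm 0 D i j = (i == j)%:R.
  move=> i j; have := @expm_entry _ D 0 i j.
  rewrite normr0 mul0r expr0n /= mulr0 mul0r addr0 => /(_ ltac:(lra)).
  by rewrite normr_le0 subr_eq0 => /eqP.
have [w1|w1] := eqVneq (w 1 0) 0; last first.
  exists 0; split => //; rewrite E !ex0 /= mul0r add0r mul1r //.
have w0 : w 0 0 != 0.
  apply: contraNneq wne => w0; apply/eqP/matrixP => i j; rewrite (ord1 j) [RHS]mxE.
  have [->|->] : i = 0 \/ i = 1.
    by case: i => [[|[|//]]] ?; [left|right]; apply: val_inj.
  exact: w0.
  exact: w1.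
have dn := D10_neq0 hb hc.
set d := `|D 1 0|.
have d0 : 0 < d by rewrite normr_gt0.
set m := mD D.
have dm : d <= m by exact: mD_ge.
have m0 : 0 < m by apply: lt_le_trans dm.
set s := d / (4 * m ^+ 2).
have hs4 : s * (4 * m ^+ 2) = d.
  by rewrite /s mulfVK // mulf_neq0 // expf_neq0 // lt0r_neq0.
have sp : 0 < s by rewrite /s divr_gt0 // mulr_gt0 // exprn_gt0.
exists s; split; first exact: ltW.
have := @expm_entry _ D s 1 0.
rewrite (ger0_norm (ltW sp)) -/m.
have hsm : s * m <= 1 / 2.
  have e1 : s * m * (4 * m) = d by rewrite -hs4; ring.
  nra.
move=> /(_ hsm).
rewrite (_ : (1 == 0 :> 'I_2) = false) // add0r.
move=> H; rewrite E w1 mulr0 addr0 mulf_neq0 //.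
apply/eqP => E0; move: H; rewrite E0 sub0r normrN normrM (ger0_norm (ltW sp)) -/d.
have : 2 * (s * m) ^+ 2 = s * d / 2.
  by rewrite -hs4; field.
move=> ->.
have : 0 < s * d by rewrite mulr_gt0.
lra.
Qed.
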